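(* Let $\mathcal S$ be the stabilizer group of an $n$-qubit stabilizer code ($-I\notin\mathcal S$), generated by independent commuting Pauli operators $S_1,\dots,S_r$, and for $x\in\mathbb F_2^r$ let $\Pi_x=\prod_{i=1}^r\frac12(I+(-1)^{x_i}S_i)$. Let $\mathcal M(\sigma)=\sum_{x\in\mathbb F_2^r}|x\rangle\langle x|\otimes\Pi_x\sigma\Pi_x$. Let $B\subseteq[n]$ be recoverable, i.e. every Pauli operator supported on $B$ that commutes with all $S_i$ equals $\lambda S$ for some $S\in\mathcal S$ and $\lambda\in\{\pm1,\pm i\}$. Let $\mathcal E_B$ be a linear superoperator on $n$ qubits acting as the identity on the qubits outside $B$, and let $\rho$ be a density operator with $\Pi_0\rho\Pi_0=\rho$. Then there exist complex numbers $\alpha_x$ and Pauli operators $E_x$ supported on $B$ ($x\in\mathbb F_2^r$) such that $$\mathcal M(\mathcal E_B(\rho))=\sum_{x\in\mathbb F_2^r}\alpha_x\,|x\rangle\langle x|\otimes E_x\rho E_x.$$ If $\mathcal E_B$ is trace preserving, then $\sum_x\alpha_x=1$.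
   Context: Pauli operators are tensor products of $I,X,Y,Z$ with phases; a superoperator acts as the identity outside $B$ if it has the form $\mathcal I_{[n]\setminus B}\otimes\mathcal E$. *)

(* Defs.v *)
From HB Require Import structures.
From mathcomp Require Import all_boot all_order all_algebra.
From mathcomp Require Import reals.
From mathcomp.real_closed Require Export complex mxtens.
Set Implicit Arguments. Unset Strict Implicit. Unset Printing Implicit Defensive.
Import Order.TTheory GRing.Theory Num.Theory.
Local Open Scope ring_scope.

Section Qubits.
Variable R : realType.
Local Notation C := (R[i]).

(* k-th bit of the binary expansion of an index (little endian): the
   computational basis vector |i> of n qubits has qubit k in state bit i k. *)
Definition bit {m : nat} (i : 'I_m) (k : nat) : bool := odd (i %/ 2 ^ k).

Inductive pauli1 := PI | PX | PY | PZ.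

Definition sigma (s : pauli1) (a b : bool) : C :=
  match s with
  | PI => (a == b)%:R
  | PX => (a != b)%:R
  | PY => if a == b then 0 else if a then 'i else - 'i
  | PZ => if a == b then (if a then -1 else 1) else 0
  end.

(* the tensor product  sigma_{p 0} (x) ... (x) sigma_{p (n-1)} *)
Definition pauli_string (n : nat) (p : 'I_n -> pauli1) : 'M[C]_(2 ^ n) :=
  \matrix_(i, j) \prod_(k < n) sigma (p k) (bit i k) (bit j k).

(* Pauli operators: phase in {1,-1,i,-i} (i.e. c^4 = 1) times a Pauli string *)
Definition is_pauli (n : nat) (P : 'M[C]_(2 ^ n)) : Prop :=
  exists (c : C) (p : 'I_n -> pauli1), c ^+ 4 = 1 /\ P = c *: pauli_string p.

Definition pauli_supported_on (n : nat) (B : {set 'I_n}) (P : 'M[C]_(2 ^ n)) : Prop :=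
  exists (c : C) (p : 'I_n -> pauli1),
    c ^+ 4 = 1 /\ (forall k, k \notin B -> p k = PI) /\ P = c *: pauli_string p.

Inductive gen_group (n : nat) (G : 'M[C]_(2 ^ n) -> Prop) : 'M[C]_(2 ^ n) -> Prop :=
  | gen_one : gen_group G 1%:M
  | gen_gen M : G M -> gen_group G M
  | gen_mul M N : gen_group G M -> gen_group G N -> gen_group G (M *m N)
  | gen_inv M : gen_group G M -> M \in unitmx -> gen_group G (invmx M).

Definition stab_group (n r : nat) (S : 'I_r -> 'M[C]_(2 ^ n)) : 'M[C]_(2 ^ n) -> Prop :=
  gen_group (fun M => exists i, M = S i).

Definition stabilizer_generators (n r : nat) (S : 'I_r -> 'M[C]_(2 ^ n)) : Prop :=
  [/\ forall i, is_pauli (S i),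
      forall i j, S i *m S j = S j *m S i,
      forall i, ~ gen_group (fun M => exists j, j != i /\ M = S j) (S i)
    & ~ stab_group S (- 1%:M)].

Definition syn_proj (n r : nat) (S : 'I_r -> 'M[C]_(2 ^ n)) (y : 'I_r -> bool)
  : 'M[C]_(2 ^ n) :=
  \big[mulmx/1%:M]_(i < r) (2^-1 *: (1%:M + ((-1) ^+ y i) *: S i)).

(* Pi_x for x in F_2^r, encoded as the basis index x : 'I_(2^r) *)
Definition Pi (n r : nat) (S : 'I_r -> 'M[C]_(2 ^ n)) (x : 'I_(2 ^ r)) : 'M[C]_(2 ^ n) :=
  syn_proj S (fun i => bit x i).

Definition meas (n r : nat) (S : 'I_r -> 'M[C]_(2 ^ n)) (s : 'M[C]_(2 ^ n))
  : 'M[C]_(2 ^ r * 2 ^ n) :=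
  \sum_(x < 2 ^ r) (delta_mx x x *t (Pi S x *m s *m Pi S x)).

Definition recoverable (n r : nat) (S : 'I_r -> 'M[C]_(2 ^ n)) (B : {set 'I_n}) : Prop :=
  forall P, pauli_supported_on B P -> (forall i, P *m S i = S i *m P) ->
    exists (lam : C) (M : 'M[C]_(2 ^ n)), lam ^+ 4 = 1 /\ stab_group S M /\ P = lam *: M.

Definition agree_out (n : nat) (B : {set 'I_n}) (i k : 'I_(2 ^ n)) : bool :=
  [forall q : 'I_n, (q \notin B) ==> (bit i q == bit k q)].
Definition agree_in (n : nat) (B : {set 'I_n}) (i k : 'I_(2 ^ n)) : bool :=
  [forall q : 'I_n, (q \in B) ==> (bit i q == bit k q)].

(* F = I_{[n]\B} (x) E for a linear superoperator E on the qubits of B,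
   where E(|b><b'|) = sum_{c,c'} K b b' c c' |c><c'| (b,b',c,c' bit strings on B). *)
Definition acts_as_id_outside (n : nat) (B : {set 'I_n})
    (F : 'M[C]_(2 ^ n) -> 'M[C]_(2 ^ n)) : Prop :=
  exists K : 'I_(2 ^ n) -> 'I_(2 ^ n) -> 'I_(2 ^ n) -> 'I_(2 ^ n) -> C,
    (forall i j k l i' j' k' l', agree_in B i i' -> agree_in B j j' ->
        agree_in B k k' -> agree_in B l l' -> K i j k l = K i' j' k' l') /\
    (forall M, F M = \matrix_(k, l) \sum_(i < 2 ^ n) \sum_(j < 2 ^ n)
        ((agree_out B i k && agree_out B j l)%:R * K i j k l * M i j)).

Definition density (n : nat) (rho : 'M[C]_(2 ^ n)) : Prop :=
  (forall v : 'cV[C]_(2 ^ n), 0 <= ((map_mx (fun z => z^*) v)^T *m rho *m v) ord0 ord0)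
  /\ \tr rho = 1.

End Qubits.

(* Main.v *)
Require Import Defs.
From HB Require Import structures.
From mathcomp Require Import all_boot all_order all_algebra.
From mathcomp Require Import reals.
From mathcomp.real_closed Require Import complex mxtens.
From mathcomp.algebra_tactics Require Import ring.
Set Implicit Arguments. Unset Strict Implicit. Unset Printing Implicit Defensive.
Import GRing.Theory Num.Theory.
Local Open Scope ring_scope.

Lemma two_pow_gt0 n : (0 < 2 ^ n)%N.
Proof. by rewrite expn_gt0. Qed.

Lemma bits_nat_inj n a b : (a < 2 ^ n)%N -> (b < 2 ^ n)%N ->
  (forall t, (t < n)%N -> odd (a %/ 2 ^ t) = odd (b %/ 2 ^ t)) -> a = b.
Proof.
elim: n a b => [|n IH] a b.
  by rewrite expn0 !ltnS !leqn0 => /eqP -> /eqP ->.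
move=> ha hb h.
have h0 := h 0%N isT; rewrite expn0 !divn1 in h0.
have hh : (a %/ 2 = b %/ 2)%N.
  apply: IH.
  - by rewrite ltn_divLR // -expnSr.
  - by rewrite ltn_divLR // -expnSr.
  move=> t ht; rewrite -!divnMA -expnS; exact: h.
by rewrite -(ssrnat.odd_double_half a) -(ssrnat.odd_double_half b) h0 -!divn2 hh.
Qed.

Section Bits.
Variable n : nat.

Definition bitsf (i : 'I_(2 ^ n)) : {ffun 'I_n -> bool} := [ffun t : 'I_n => bit i t].

Lemma bitsf_inj : injective bitsf.
Proof.
move=> i j /ffunP h; apply: val_inj; apply: (@bits_nat_inj n) => [||t ht]; rewrite ?ltn_ord //.
by have := h (Ordinal ht); rewrite !ffunE.
Qed.

Lemma bitsf_bij : bijective bitsf.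
Proof.
apply: inj_card_bij; first exact: bitsf_inj.
by rewrite card_ffun !card_ord card_bool.
Qed.

Definition idx (f : {ffun 'I_n -> bool}) : 'I_(2 ^ n) :=
  odflt (Ordinal (two_pow_gt0 n)) [pick i | bitsf i == f].

Lemma idxK : cancel idx bitsf.
Proof.
move=> f; rewrite /idx; case: pickP => [i /eqP //|h].
have [g _ gK] := bitsf_bij.
by have := h (g f); rewrite gK eqxx.
Qed.

Lemma bitsfK : cancel bitsf idx.
Proof. by move=> i; apply: bitsf_inj; rewrite idxK. Qed.

Lemma bit_idx f (t : 'I_n) : bit (idx f) t = f t.
Proof. by have := congr1 (fun g : {ffun 'I_n -> bool} => g t) (idxK f); rewrite ffunE. Qed.

Lemma bit_inj (i j : 'I_(2 ^ n)) : (forall t : 'I_n, bit i t = bit j t) -> i = j.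
Proof. by move=> h; apply: bitsf_inj; apply/ffunP => t; rewrite !ffunE. Qed.

Lemma sum_bits (R : nzSemiRingType) (V : comNzSemiRingType) (h : 'I_n -> bool -> V) :
  \sum_(k < 2 ^ n) \prod_(t < n) h t (bit k t) =
  \prod_(t < n) \sum_(b : bool) h t b.
Proof.
rewrite bigA_distr_bigA /=.
rewrite (reindex bitsf) /=; last first.
  by exists idx => f _; [rewrite bitsfK | rewrite idxK].
by apply: eq_bigr => k _; apply: eq_bigr => t _; rewrite ffunE.
Qed.

End Bits.
Definition p2b (s : pauli1) : bool * bool :=
  match s with PI => (false,false) | PX => (true,false) | PY => (true,true) | PZ => (false,true) end.
Definition b2p (b : bool * bool) : pauli1 :=
  match b with (false,false) => PI | (true,false) => PX | (true,true) => PY | (false,true) => PZ end.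
Lemma p2bK : cancel p2b b2p. Proof. by case. Qed.
HB.instance Definition _ := Finite.copy pauli1 (can_type p2bK).

Definition pm (a c : pauli1) : pauli1 :=
  match a, c with
  | PI, _ => c | _, PI => a
  | PX, PX => PI | PY, PY => PI | PZ, PZ => PI
  | PX, PY => PZ | PY, PX => PZ | PY, PZ => PX | PZ, PY => PX
  | PZ, PX => PY | PX, PZ => PY
  end.

Definition anti (a c : pauli1) : bool := [&& a != PI, c != PI & a != c].

Section Qubit.
Variable R : realType.
Local Notation C := (R[i]).

Definition om (a c : pauli1) : C :=
  match a, c with
  | PX, PY => 'i | PY, PX => - 'i | PY, PZ => 'i | PZ, PY => - 'i
  | PZ, PX => 'i | PX, PZ => - 'i
  | _, _ => 1
  end.

Lemma sigma_mul a c x y :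
  \sum_(b : bool) sigma R a x b * sigma R c b y = om a c * sigma R (pm a c) x y.
Proof.
case: a; case: c; case: x; case: y; rewrite big_bool /=;
rewrite ?(mulr0, mul0r, mulr1, mul1r, add0r, addr0, mulrN, mulNr, opprK, mulCii) //.
Qed.

Lemma om_comm a c : om a c = (if anti a c then -1 else 1) * om c a.
Proof. by case: a; case: c; rewrite /= ?mul1r ?mulN1r ?opprK. Qed.

Lemma i4 : 'i ^+ 4 = 1 :> C.
Proof. by rewrite (_ : 4%N = 2 * 2)%N // exprM sqrCi sqrrN expr1n. Qed.
Lemma Ni4 : (- 'i) ^+ 4 = 1 :> C.
Proof. by rewrite (_ : 4%N = 2 * 2)%N // exprM sqrrN sqrCi sqrrN expr1n. Qed.
Lemma om4 a c : om a c ^+ 4 = 1.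
Proof. by case: a; case: c; rewrite /= ?expr1n ?i4 ?Ni4. Qed.
Lemma pm_comm a c : pm a c = pm c a. Proof. by case: a; case: c. Qed.
Lemma pm_diag a : pm a a = PI. Proof. by case: a. Qed.
Lemma om_diag a : om a a = 1. Proof. by case: a. Qed.
Definition eps (a c : pauli1) : C := if anti a c then -1 else 1.

Lemma prod_nat_bool (I : finType) (b : I -> bool) :
  \prod_(t : I) ((b t)%:R : C) = ([forall t, b t])%:R.
Proof.
case: (boolP [forall t, b t]) => [/forallP h|/forallPn [t /negbTE ht]].
  by apply: big1 => t _; rewrite h.
by rewrite (bigD1 t) //= ht mul0r.
Qed.

Definition TM n (f : 'I_n -> bool -> bool -> C) : 'M[C]_(2 ^ n) :=
  \matrix_(i, j) \prod_(t < n) f t (bit i t) (bit j t).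

Lemma mul_TM n f g : TM f *m TM g =
  TM (fun (t : 'I_n) a b => \sum_(c : bool) f t a c * g t c b).
Proof.
apply/matrixP => i j; rewrite !mxE.
under eq_bigr do rewrite !mxE -big_split /=.
by rewrite (@sum_bits n C C (fun t c => f t (bit i t) c * g t c (bit j t))).
Qed.

Local Notation PS := (pauli_string R).
Lemma PSE n (p : 'I_n -> pauli1) :
  PS p = TM (fun t => sigma R (p t)).
Proof. by []. Qed.

Lemma eq_pauli n (p q : 'I_n -> pauli1) : p =1 q -> PS p = PS q.
Proof. by move=> h; apply/matrixP => i j; rewrite !mxE; apply: eq_bigr => t _; rewrite h. Qed.

Lemma pauli_mul n (p q : 'I_n -> pauli1) :
  PS p *m PS q =
  (\prod_t om (p t) (q t)) *: PS (fun t => pm (p t) (q t)).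
Proof.
rewrite !PSE mul_TM; apply/matrixP => i j; rewrite !mxE.
rewrite -big_split; apply: eq_bigr => t _ /=; exact: sigma_mul.
Qed.

Lemma pauli_I n : PS (fun _ : 'I_n => PI) = 1%:M.
Proof.
apply/matrixP => i j; rewrite !mxE /= prod_nat_bool.
case: (i =P j) => [->|ne].
  by rewrite (introT forallP) // => t.
case: forallP => // h; case: ne; apply: bit_inj => t; apply/eqP; exact: h.
Qed.

Lemma pauli_sq n (p : 'I_n -> pauli1) : PS p *m PS p = 1%:M.
Proof.
rewrite pauli_mul (eq_bigr (fun _ => 1)) => [|t _]; last exact: om_diag.
rewrite big1_eq scale1r -(pauli_I n); apply: eq_pauli => t; exact: pm_diag.
Qed.

Lemma pauli_comm n (p q : 'I_n -> pauli1) :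
  PS p *m PS q = (\prod_t eps (p t) (q t)) *: (PS q *m PS p).
Proof.
rewrite !pauli_mul scalerA -big_split /=.
rewrite (eq_pauli (q := fun t => pm (q t) (p t))) => [|t]; last exact: pm_comm.
by congr (_ *: _); apply: eq_bigr => t _; rewrite om_comm.
Qed.

Lemma prod_eps_sq n (p q : 'I_n -> pauli1) : (\prod_t eps (p t) (q t)) ^+ 2 = 1.
Proof.
rewrite -prodrXl; apply: big1 => t _; rewrite /eps; case: anti; by rewrite ?sqrrN expr1n.
Qed.

Lemma sign_of (x : C) : x ^+ 2 = 1 -> exists b : bool, x = (-1) ^+ b.
Proof.
move/eqP; rewrite sqrf_eq1 => /orP [/eqP ->|/eqP ->]; first by exists false.
by exists true.
Qed.

Section Stab.
Variables (n r : nat) (S : 'I_r -> 'M[C]_(2 ^ n)).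
Hypothesis hS : stabilizer_generators S.

Lemma S_pauli j : exists (c : C) (p : 'I_n -> pauli1), c ^+ 4 = 1 /\ S j = c *: PS p.
Proof. by case: hS => h _ _ _; exact: h. Qed.

Lemma S_comm j k : S j *m S k = S k *m S j.
Proof. by case: hS => _ h _ _; exact: h. Qed.

Lemma S_sq j : S j *m S j = 1%:M.
Proof.
have [c [p [c4 hSj]]] := S_pauli j.
rewrite hSj -scalemxAl -scalemxAr pauli_sq scalerA -expr2.
have : (c ^+ 2) ^+ 2 = 1 by rewrite -exprM.
move/eqP; rewrite sqrf_eq1 => /orP [/eqP ->|/eqP hc]; first by rewrite scale1r.
case: hS => _ _ _ []; rewrite -scaleN1r -hc.
have -> : c ^+ 2 *: (1%:M : 'M[C]_(2 ^ n)) = S j *m S j.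
  by rewrite hSj -scalemxAl -scalemxAr pauli_sq scalerA -expr2.
by apply: gen_mul; apply: gen_gen; exists j.
Qed.
Lemma sign_comm (p : 'I_n -> pauli1) j :
  exists b : bool, PS p *m S j = (-1) ^+ b *: (S j *m PS p).
Proof.
have [c [s [_ ->]]] := S_pauli j.
have [b hb] := sign_of (prod_eps_sq p s).
exists b; rewrite -scalemxAr pauli_comm hb -scalemxAl !scalerA.
by rewrite mulrC.
Qed.

Definition syn (p : 'I_n -> pauli1) (j : 'I_r) : bool := PS p *m S j != S j *m PS p.

Lemma synP p j : PS p *m S j = (-1) ^+ syn p j *: (S j *m PS p).
Proof.
rewrite /syn; case: eqP => [->|ne]; first by rewrite scale1r.
have [[] hb] := sign_comm p j => //.
by case: ne; rewrite hb scale1r.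
Qed.

Definition fac (y : 'I_r -> bool) (j : 'I_r) : 'M[C]_(2 ^ n) :=
  2^-1 *: (1%:M + (-1) ^+ y j *: S j).

Lemma P_fac p y j : PS p *m fac y j = fac (fun k => y k (+) syn p k) j *m PS p.
Proof.
rewrite /fac -scalemxAl -scalemxAr mulmxDr mulmxDl mulmx1 mul1mx.
by rewrite -scalemxAr synP scalerA -signr_addb -scalemxAl.
Qed.

Lemma big_mulmx_comm (s : seq 'I_r) (f g : 'I_r -> 'M[C]_(2 ^ n)) (A : 'M[C]_(2 ^ n)) :
  (forall j, A *m f j = g j *m A) ->
  A *m \big[mulmx/1%:M]_(j <- s) f j = \big[mulmx/1%:M]_(j <- s) g j *m A.
Proof.
move=> h; elim: s => [|a s IH]; first by rewrite !big_nil mulmx1 mul1mx.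
by rewrite !big_cons mulmxA h -mulmxA IH mulmxA.
Qed.

Lemma P_syn p y :
  PS p *m syn_proj S y = syn_proj S (fun k => y k (+) syn p k) *m PS p.
Proof. by apply: big_mulmx_comm => j; exact: P_fac. Qed.

Lemma lc_mul (X : 'M[C]_(2 ^ n)) a1 b1 a2 b2 : X *m X = 1%:M ->
  (a1 *: 1%:M + b1 *: X) *m (a2 *: 1%:M + b2 *: X) =
  (a1 * a2 + b1 * b2) *: 1%:M + (a1 * b2 + b1 * a2) *: X.
Proof.
move=> hX; rewrite mulmxDl !mulmxDr -!scalemxAl -!scalemxAr !mul1mx !mulmx1 hX.
rewrite !scalerA !scalerDl [(b1 * a2) *: X + _]addrC addrACA.
by rewrite [b1 * a2]mulrC [a1 * a2]mulrC [a1 * b2]mulrC [b1 * b2]mulrC.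
Qed.

Lemma facE y j : fac y j = 2^-1 *: 1%:M + (2^-1 * (-1) ^+ y j) *: S j.
Proof. by rewrite /fac scalerDr scalerA. Qed.

Lemma fac_mul y y' j : fac y j *m fac y' j = (y j == y' j)%:R *: fac y j.
Proof.
rewrite !facE lc_mul ?S_sq // scalerDr !scalerA.
case: (y j); case: (y' j); congr (_ *: _ + _ *: _); rewrite /= ?expr1 ?expr0. all: by field.
Qed.


End Stab.

End Qubit.

Lemma fac_def (R : realType) n r (S : 'I_r -> 'M[R[i]]_(2 ^ n)) y j :
  fac S y j = 2^-1 *: (1%:M + (-1) ^+ y j *: S j).
Proof. by []. Qed.


Section Qubit2.
Variable R : realType.
Local Notation C := (R[i]).
Local Notation PS := (pauli_string R).
Local Notation om := (om R).

Section Stab2.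
Variables (n r : nat) (S : 'I_r -> 'M[C]_(2 ^ n)).
Hypothesis hS : stabilizer_generators S.
Local Notation fac := (fac S).
Local Notation syn := (syn S).


Lemma fac_comm y y' j k : fac y j *m fac y' k = fac y' k *m fac y j.
Proof.
rewrite !fac_def -!scalemxAl -!scalemxAr !mulmxDl !mulmxDr !mul1mx !mulmx1.
rewrite -!scalemxAl -!scalemxAr.
rewrite (S_comm hS j k).
rewrite !scalerA [(-1) ^+ y j * _]mulrC.
by rewrite !addrA (addrAC 1%:M).
Qed.

Definition Q (s : seq 'I_r) y := \big[mulmx/1%:M]_(j <- s) fac y j.

Lemma fac_Q_comm s y y' j : fac y j *m Q s y' = Q s y' *m fac y j.
Proof. by apply: big_mulmx_comm => k; exact: fac_comm. Qed.

Lemma Q_mul s y y' : Q s y *m Q s y' = (\prod_(j <- s) ((y j == y' j)%:R : C)) *: Q s y.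
Proof.
elim: s => [|a s IH]; first by rewrite /Q !big_nil mulmx1 scale1r.
rewrite /Q !big_cons -/(Q s y) -/(Q s y').
rewrite !mulmxA -(mulmxA _ (Q s y)) -fac_Q_comm mulmxA (fac_mul hS) -mulmxA IH.
by rewrite -scalemxAl -scalemxAr scalerA.
Qed.

Lemma syn_mul y y' : syn_proj S y *m syn_proj S y' =
  ([forall j, y j == y' j])%:R *: syn_proj S y.
Proof. by rewrite -prod_nat_bool; apply: Q_mul. Qed.

Lemma S_fac_comm j y a : S j *m fac y a = fac y a *m S j.
Proof.
rewrite !fac_def -scalemxAl -scalemxAr mulmxDl mulmxDr mul1mx mulmx1.
by rewrite -scalemxAl -scalemxAr (S_comm hS j a).
Qed.

Lemma S_fac0 j : S j *m fac (fun _ => false) j = fac (fun _ => false) j.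
Proof.
rewrite !fac_def -scalemxAr mulmxDr mulmx1 expr0 scale1r (S_sq hS).
by rewrite addrC.
Qed.

Lemma S_Q0 s j : j \in s -> S j *m Q s (fun _ => false) = Q s (fun _ => false).
Proof.
elim: s => [//|a s IH]; rewrite inE /Q big_cons -/(Q s _).
case: eqP => [-> _|_ /= hj]; first by rewrite mulmxA S_fac0.
by rewrite mulmxA S_fac_comm -mulmxA IH.
Qed.

Lemma S_Pi0 j : S j *m syn_proj S (fun _ => false) = syn_proj S (fun _ => false).
Proof. exact: (S_Q0 (mem_index_enum j)). Qed.

Lemma Pi0_S j : syn_proj S (fun _ => false) *m S j = syn_proj S (fun _ => false).
Proof.
have := @big_mulmx_comm R n r (index_enum _) (fac (fun _ => false)) (fac (fun _ => false)) (S j) (fun k => S_fac_comm j _ k).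
by move=> h; rewrite -[RHS](S_Pi0 j); symmetry; exact: h.
Qed.

Local Notation Pi0 := (syn_proj S (fun _ => false)).

Lemma stab_Pi0 M : stab_group S M -> M *m Pi0 = Pi0 /\ Pi0 *m M = Pi0.
Proof.
elim => [|N [j ->]|N N' _ [h1 h2] _ [h3 h4]|N _ [h1 h2] hu].
- by rewrite mul1mx mulmx1.
- by rewrite S_Pi0 Pi0_S.
- by rewrite -mulmxA h3 h1 mulmxA h2 h4.
- split; first by rewrite -{1}h1 (mulKmx hu).
  by rewrite -{1}h2 (mulmxK hu).
Qed.

Lemma eq_syn y y' : y =1 y' -> syn_proj S y = syn_proj S y'.
Proof. by move=> h; apply: eq_bigr => j _; rewrite h. Qed.

Definition mt (x : 'I_(2 ^ r)) (p : 'I_n -> pauli1) : bool :=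
  [forall j : 'I_r, syn p j == bit x j].

Lemma P_Pi0 p : PS p *m Pi0 = syn_proj S (syn p) *m PS p.
Proof. by rewrite (P_syn hS); congr (_ *m _); apply: eq_syn. Qed.

Lemma Pi0_P p : Pi0 *m PS p = PS p *m syn_proj S (syn p).
Proof. by rewrite (P_syn hS); congr (_ *m _); apply: eq_syn => k; rewrite addbb. Qed.

Lemma Pix_P_Pi0 x p :
  syn_proj S (fun j => bit x j) *m PS p *m Pi0 = (mt x p)%:R *: (PS p *m Pi0).
Proof.
rewrite -mulmxA P_Pi0 mulmxA syn_mul.
case: (boolP [forall j : 'I_r, bit x j == syn p j]) => [/forallP h|/forallP h].
  have -> : mt x p by apply/forallP => j; rewrite eq_sym h.
  rewrite !scale1r (@eq_syn (fun j => bit x j) (syn p)) // => k; exact/eqP.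
have -> : mt x p = false.
  apply/negbTE/forallP => h'; apply: h => j; rewrite eq_sym; exact: h'.
by rewrite !scale0r mul0mx.
Qed.

Lemma Pi0_P_Pix x p :
  Pi0 *m (PS p *m syn_proj S (fun j => bit x j)) = (mt x p)%:R *: (Pi0 *m PS p).
Proof.
rewrite mulmxA Pi0_P -mulmxA syn_mul -scalemxAr /mt.
case: (boolP [forall j : 'I_r, syn p j == bit x j]) => _; first by rewrite scale1r.
by rewrite !scale0r.
Qed.

Lemma term_proj x p q rho : Pi0 *m rho *m Pi0 = rho ->
  syn_proj S (fun j => bit x j) *m (PS p *m rho *m PS q) *m syn_proj S (fun j => bit x j)
  = (mt x p && mt x q)%:R *: (PS p *m rho *m PS q).
Proof.
move=> hrho; rewrite -hrho -!mulmxA Pi0_P_Pix -!scalemxAr !mulmxA Pix_P_Pi0.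
by rewrite -!scalemxAl scalerA -natrM mulnb andbC.
Qed.

Lemma stab_rho M rho : Pi0 *m rho *m Pi0 = rho -> stab_group S M ->
  M *m rho = rho /\ rho *m M = rho.
Proof.
move=> hrho /stab_Pi0 [h1 h2]; rewrite -hrho; split.
  by rewrite !mulmxA h1.
by rewrite -mulmxA h2.
Qed.

Lemma same_syn_commute p q j : syn p =1 syn q ->
  (PS p *m PS q) *m S j = S j *m (PS p *m PS q).
Proof.
move=> h; rewrite -mulmxA (synP hS q) -scalemxAr (mulmxA (PS p)) (synP hS p) -scalemxAl.
rewrite scalerA h -signr_addb addbb expr0 scale1r.
by rewrite !mulmxA.
Qed.

Variable B : {set 'I_n}.
Definition suppB (p : 'I_n -> pauli1) := forall k, k \notin B -> p k = PI.

Lemma prod_supported p q : suppB p -> suppB q -> pauli_supported_on B (PS p *m PS q).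
Proof.
move=> hp hq; exists (\prod_t om (p t) (q t)), (fun t => pm (p t) (q t)); split.
  by rewrite -prodrXl; apply: big1 => t _; rewrite om4.
split; last exact: pauli_mul.
by move=> k hk; rewrite hp // hq.
Qed.

Lemma recover_left p p0 rho : Pi0 *m rho *m Pi0 = rho -> recoverable S B ->
  suppB p -> suppB p0 -> syn p =1 syn p0 ->
  exists k : C, PS p *m rho = k *: (PS p0 *m rho).
Proof.
move=> hrho hrec hp hp0 hs.
have [lam [M [_ [hM e]]]] := hrec _ (prod_supported hp0 hp) (fun j => same_syn_commute j (fun k => esym (hs k))).
exists lam.
have -> : PS p = PS p0 *m (PS p0 *m PS p) by rewrite mulmxA pauli_sq mul1mx.
rewrite e -scalemxAr -scalemxAl -mulmxA.
by have [-> _] := stab_rho hrho hM.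
Qed.

Lemma recover_right q p0 rho : Pi0 *m rho *m Pi0 = rho -> recoverable S B ->
  suppB q -> suppB p0 -> syn q =1 syn p0 ->
  exists k : C, rho *m PS q = k *: (rho *m PS p0).
Proof.
move=> hrho hrec hq hp0 hs.
have [lam [M [_ [hM e]]]] := hrec _ (prod_supported hq hp0) (fun j => same_syn_commute j hs).
exists lam.
have -> : PS q = (PS q *m PS p0) *m PS p0 by rewrite -mulmxA pauli_sq mulmx1.
rewrite e -scalemxAl -scalemxAr mulmxA.
by have [_ ->] := stab_rho hrho hM.
Qed.

End Stab2.
Section FD.
Variables (n : nat) (B : {set 'I_n}).
Lemma sum_pauli1 (f : pauli1 -> C) : \sum_s f s = f PI + f PX + f PY + f PZ.
Proof.
rewrite (reindex b2p) /=; last first.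
  by exists p2b => s _; [case: s => [[] []] | rewrite p2bK].
rewrite (eq_bigr (fun j => f (b2p (j.1, j.2)))) => [|[] //].
rewrite -(pair_bigA _ (fun b1 b2 => f (b2p (b1, b2)))) /= !big_bool /=.
by move: (f PI) (f PX) (f PY) (f PZ) => a b c d; ring.
Qed.

Definition dcoef (a b : bool) (s : pauli1) : C :=
  match s with
  | PI => (a == b)%:R / 2
  | PZ => (a == b)%:R * (if a then -1 else 1) / 2
  | PX => (a != b)%:R / 2
  | PY => (a != b)%:R * (if a then - 'i else 'i) / 2
  end.

Lemma unit_exp a b x y :
  ((x == a) && (y == b))%:R = \sum_s dcoef a b s * sigma R s x y.
Proof.
rewrite sum_pauli1; case: a; case: b; case: x; case: y; rewrite /= ?eqxx /=.
all: rewrite ?(mulr0, mul0r, mulr1, mul1r, add0r, addr0, mulrN, mulNr, opprK, mulCii).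
all: rewrite ?[_ / 2 * 'i]mulrAC ?mulCii.
all: by field.
Qed.

Lemma id_exp a b x y :
  ((y == x) && ~~ a && ~~ b)%:R =
  \sum_s ((s == PI) && ~~ a && ~~ b)%:R * sigma R s x y.
Proof.
rewrite sum_pauli1 /= !mul0r !addr0 eq_sym.
case: (x == y); case: a; case: b; by rewrite /= ?mulr1 ?mul0r ?mulr0.
Qed.



Local Notation T := {ffun 'I_n -> bool}.
Definition astar (k : 'I_(2 ^ n)) : T := [ffun t => (t \in B) && bit k t].
Definition cnd (a b : T) (t : 'I_n) (x y : bool) : bool :=
  if t \in B then (x == a t) && (y == b t) else (y == x) && ~~ a t && ~~ b t.
Definition W (a b : T) : 'M[C]_(2 ^ n) := TM (fun t x y => ((cnd a b t x y)%:R : C)).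
Definition Dc (a b : T) (t : 'I_n) (s : pauli1) : C :=
  if t \in B then dcoef (a t) (b t) s else ((s == PI) && ~~ a t && ~~ b t)%:R.

Lemma W_entry a b k i :
  W a b k i = [&& agree_out B i k, a == astar k & b == astar i]%:R.
Proof.
rewrite /W /TM mxE prod_nat_bool.
suff -> : [forall t, cnd a b t (bit k t) (bit i t)] =
  [&& agree_out B i k, a == astar k & b == astar i] by [].
apply/idP/idP.
  move/forallP => h; apply/and3P; split.
  - apply/forallP => t; apply/implyP => tB; have := h t.
    by rewrite /cnd (negbTE tB) => /andP [/andP []].
  - apply/eqP/ffunP => t; rewrite ffunE; have := h t; rewrite /cnd.
    by case: (t \in B) => /=; [case/andP => /eqP <- | case/andP => /andP [_ /negbTE ->] _].
  - apply/eqP/ffunP => t; rewrite ffunE; have := h t; rewrite /cnd.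
    by case: (t \in B) => /=; [case/andP => _ /eqP <- | case/andP => _ /negbTE ->].
case/and3P => /forallP hao /eqP -> /eqP ->; apply/forallP => t; rewrite /cnd !ffunE.
case: (boolP (t \in B)) => tB /=; first by rewrite !eqxx.
by rewrite (implyP (hao t) tB).
Qed.

Lemma cnd_exp a b t x y :
  ((cnd a b t x y)%:R : C) = \sum_s Dc a b t s * sigma R s x y.
Proof. by rewrite /cnd /Dc; case: (t \in B); [exact: unit_exp | exact: id_exp]. Qed.

Lemma W_exp a b :
  W a b = \sum_(p : {ffun 'I_n -> pauli1}) (\prod_t Dc a b t (p t)) *: PS p.
Proof.
apply/matrixP => k i; rewrite /W /TM mxE summxE.
under eq_bigr do rewrite cnd_exp.
rewrite bigA_distr_bigA /=; apply: eq_bigr => p _.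
by rewrite !mxE -big_split.
Qed.

Variable K : 'I_(2 ^ n) -> 'I_(2 ^ n) -> 'I_(2 ^ n) -> 'I_(2 ^ n) -> C.
Hypothesis hK : forall i j k l i' j' k' l', agree_in B i i' -> agree_in B j j' ->
        agree_in B k k' -> agree_in B l l' -> K i j k l = K i' j' k' l'.

Definition kappa (u : (T * T) * (T * T)) : C :=
  K (idx u.1.2) (idx u.2.1) (idx u.1.1) (idx u.2.2).

Lemma agree_out_sym i k : agree_out B i k = agree_out B k i.
Proof. by apply: eq_forallb => q; rewrite eq_sym. Qed.

Lemma agree_in_astar i : agree_in B (idx (astar i)) i.
Proof. by apply/forallP => q; apply/implyP => qB; rewrite bit_idx ffunE qB. Qed.

Lemma sumW k i j l :
  \sum_(u : (T * T) * (T * T)) kappa u * W u.1.1 u.1.2 k i * W u.2.1 u.2.2 j l =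
  (agree_out B i k && agree_out B j l)%:R * K i j k l.
Proof.
rewrite (bigD1 ((astar k, astar i), (astar j, astar l))) //= big1 => [|[[a b] [c d]] /= ne]; last first.
  move: ne; rewrite !W_entry !xpair_eqE.
  case: (a == astar k); case: (b == astar i); case: (c == astar j); case: (d == astar l);
    by rewrite /= ?andbF ?mulr0 ?mul0r.
rewrite !W_entry !eqxx !andbT addr0 /kappa /=.
rewrite (hK (agree_in_astar i) (agree_in_astar j) (agree_in_astar k) (agree_in_astar l)).
rewrite (agree_out_sym l j) -mulnb natrM.
by ring.
Qed.

Lemma F_W (F : 'M[C]_(2 ^ n) -> 'M[C]_(2 ^ n)) :
  (forall M, F M = \matrix_(k, l) \sum_(i < 2 ^ n) \sum_(j < 2 ^ n)
        ((agree_out B i k && agree_out B j l)%:R * K i j k l * M i j)) ->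
  forall M, F M = \sum_(u : (T * T) * (T * T))
     kappa u *: (W u.1.1 u.1.2 *m M *m W u.2.1 u.2.2).
Proof.
move=> hF M; rewrite hF; apply/matrixP => k l; rewrite !mxE summxE.
under eq_bigr do under eq_bigr do rewrite -sumW mulr_suml.
under eq_bigr do rewrite exchange_big.
rewrite exchange_big; apply: eq_bigr => u _.
rewrite !mxE mulr_sumr; under [RHS]eq_bigr do rewrite !mxE mulr_suml mulr_sumr.
rewrite exchange_big; apply: eq_bigr => i _; apply: eq_bigr => j _.
by rewrite /W /TM !mxE; ring.
Qed.



Definition suppB' (p : 'I_n -> pauli1) := forall k, k \notin B -> p k = PI.

Definition Dp (ab : T * T) (p : {ffun 'I_n -> pauli1}) : C := \prod_t Dc ab.1 ab.2 t (p t).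

Lemma Dp_supp ab p : Dp ab p != 0 -> suppB' p.
Proof.
move=> hne k kB; apply/eqP; apply: contraNT hne => hk.
by rewrite /Dp (bigD1 k) //= /Dc (negbTE kB) (negbTE hk) mul0r.
Qed.

Lemma WMW a b c d M : W a b *m M *m W c d =
  \sum_(p : {ffun 'I_n -> pauli1}) \sum_(q : {ffun 'I_n -> pauli1})
     (Dp (a, b) p * Dp (c, d) q) *: (PS p *m M *m PS q).
Proof.
rewrite !W_exp mulmx_sumr.
under eq_bigr do rewrite !mulmx_suml.
rewrite exchange_big; apply: eq_bigr => p _; apply: eq_bigr => q _.
by rewrite -!scalemxAl -scalemxAr scalerA mulrC.
Qed.

Definition cc (p q : {ffun 'I_n -> pauli1}) : C :=
  \sum_(u : (T * T) * (T * T)) kappa u * (Dp u.1 p * Dp u.2 q).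

Lemma cc_supp p q : cc p q != 0 -> suppB' p /\ suppB' q.
Proof.
move=> hne; split.
  case: (boolP [forall k, (k \notin B) ==> (p k == PI)]) => [/forallP h k kB|hn].
    by apply/eqP; exact: (implyP (h k) kB).
  case/eqP: hne; apply: big1 => u _.
  suff -> : Dp u.1 p = 0 by rewrite mul0r mulr0.
  apply/eqP; apply: contraNT hn => /Dp_supp h; apply/forallP => k; apply/implyP => kB.
  by rewrite h.
case: (boolP [forall k, (k \notin B) ==> (q k == PI)]) => [/forallP h k kB|hn].
  by apply/eqP; exact: (implyP (h k) kB).
case/eqP: hne; apply: big1 => u _.
suff -> : Dp u.2 q = 0 by rewrite mulr0 mulr0.
apply/eqP; apply: contraNT hn => /Dp_supp h; apply/forallP => k; apply/implyP => kB.
by rewrite h.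
Qed.

Lemma F_decomp (F : 'M[C]_(2 ^ n) -> 'M[C]_(2 ^ n)) :
  (forall M, F M = \matrix_(k, l) \sum_(i < 2 ^ n) \sum_(j < 2 ^ n)
        ((agree_out B i k && agree_out B j l)%:R * K i j k l * M i j)) ->
  forall M, F M = \sum_(p : {ffun 'I_n -> pauli1}) \sum_(q : {ffun 'I_n -> pauli1})
     cc p q *: (PS p *m M *m PS q).
Proof.
move=> hF M; rewrite (F_W hF).
under eq_bigr => u _ do rewrite (surjective_pairing u.1) (surjective_pairing u.2) WMW -!surjective_pairing scaler_sumr.
rewrite exchange_big; apply: eq_bigr => p _.
under eq_bigr do rewrite scaler_sumr.
rewrite exchange_big; apply: eq_bigr => q _.
rewrite /cc scaler_suml; apply: eq_bigr => u _.
by rewrite scalerA.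
Qed.

End FD.
End Qubit2.


Section Final.
Variable R : realType.
Local Notation C := (R[i]).
Local Notation PS := (pauli_string R).
Variables (n r : nat) (S : 'I_r -> 'M[C]_(2 ^ n)).
Hypothesis hS : stabilizer_generators S.
Local Notation Pi0 := (syn_proj S (fun _ => false)).
Variable B : {set 'I_n}.
Hypothesis hrec : recoverable S B.
Variable rho : 'M[C]_(2 ^ n).
Hypothesis hrho : Pi0 *m rho *m Pi0 = rho.

Lemma mt_idx x (p : 'I_n -> pauli1) : mt S x p = (x == idx [ffun j => syn S p j]).
Proof.
apply/forallP/eqP => [h|->].
  by apply: bit_inj => j; rewrite bit_idx ffunE; apply/eqP; rewrite eq_sym h.
by move=> j; rewrite bit_idx ffunE.
Qed.

Lemma mt_syn x p q : mt S x p -> mt S x q -> syn S p =1 syn S q.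
Proof. by move=> /forallP hp /forallP hq j; rewrite (eqP (hp j)) (eqP (hq j)). Qed.

Lemma term_rel p q p0 : suppB B p -> suppB B q -> suppB B p0 ->
  syn S p =1 syn S p0 -> syn S q =1 syn S p0 ->
  exists k : C, PS p *m rho *m PS q = k *: (PS p0 *m rho *m PS p0).
Proof.
move=> hp hq hp0 e1 e2.
have [k1 h1] := recover_left hS hrho hrec hp hp0 e1.
have [k2 h2] := recover_right hS hrho hrec hq hp0 e2.
exists (k1 * k2).
by rewrite h1 -scalemxAl -mulmxA h2 -scalemxAr scalerA mulmxA.
Qed.

Lemma sum_prop (I : finType) (f : I -> 'M[C]_(2 ^ n)) (Z : 'M[C]_(2 ^ n)) :
  (forall i, exists a : C, f i = a *: Z) -> exists a : C, \sum_i f i = a *: Z.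
Proof.
move=> h; apply: (big_ind (fun X => exists a : C, X = a *: Z)).
- by exists 0; rewrite scale0r.
- by move=> _ _ [a ->] [b ->]; exists (a + b); rewrite scalerDl.
- by move=> i _; apply: h.
Qed.

Variable K : 'I_(2 ^ n) -> 'I_(2 ^ n) -> 'I_(2 ^ n) -> 'I_(2 ^ n) -> C.
Hypothesis hK : forall i j k l i' j' k' l', agree_in B i i' -> agree_in B j j' ->
        agree_in B k k' -> agree_in B l l' -> K i j k l = K i' j' k' l'.
Variable F : 'M[C]_(2 ^ n) -> 'M[C]_(2 ^ n).
Hypothesis hF : forall M, F M = \matrix_(k, l) \sum_(i < 2 ^ n) \sum_(j < 2 ^ n)
        ((agree_out B i k && agree_out B j l)%:R * K i j k l * M i j).

Lemma proj_expand (x : 'I_(2 ^ r)) :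
  syn_proj S (fun j => bit x j) *m F rho *m syn_proj S (fun j => bit x j) =
  \sum_p \sum_q cc B K p q *: ((mt S x p && mt S x q)%:R *: (PS p *m rho *m PS q)).
Proof.
rewrite (F_decomp hK hF rho) mulmx_sumr mulmx_suml; apply: eq_bigr => p _.
rewrite mulmx_sumr mulmx_suml; apply: eq_bigr => q _.
by rewrite -scalemxAr -scalemxAl (term_proj hS x p q hrho).
Qed.

Lemma proj_F (x : 'I_(2 ^ r)) : exists (a : C) (p0 : 'I_n -> pauli1), suppB B p0 /\
  syn_proj S (fun j => bit x j) *m F rho *m syn_proj S (fun j => bit x j) =
  a *: (PS p0 *m rho *m PS p0).
Proof.
rewrite proj_expand.
case: (boolP [exists p0 : {ffun 'I_n -> pauli1},
   [forall k, (k \notin B) ==> (p0 k == PI)] && mt S x p0]) => [|hn].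
  move/existsP => [p0 /andP [/forallP hs0 hm0]].
  have hp0 : suppB B p0 by move=> k kB; apply/eqP; exact: (implyP (hs0 k) kB).
  have [a ha] : exists a : C, \sum_p \sum_q cc B K p q *:
      ((mt S x p && mt S x q)%:R *: (PS p *m rho *m PS q)) = a *: (PS p0 *m rho *m PS p0).
    apply: sum_prop => p; apply: sum_prop => q.
    case: (eqVneq (cc B K p q) 0) => [-> | hne]; first by exists 0; rewrite !scale0r.
    have [hsp hsq] := cc_supp hne.
    case: (boolP (mt S x p && mt S x q)) => [/andP [mp mq]|_]; last first.
      by exists 0; rewrite !scale0r scaler0.
    have [k hk] := term_rel hsp hsq hp0 (mt_syn mp hm0) (mt_syn mq hm0).
    by exists (cc B K p q * k); rewrite scale1r hk scalerA.
  by exists a, p0.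
exists 0, (fun _ => PI); split => //.
rewrite scale0r; apply: big1 => p _; apply: big1 => q _.
case: (eqVneq (cc B K p q) 0) => [-> | hne]; first by rewrite scale0r.
have [hsp _] := cc_supp hne.
case: (boolP (mt S x p)) => [mp|_]; last by rewrite /= scale0r scaler0.
case/negP: hn; apply/existsP; exists p; rewrite mp andbT.
by apply/forallP => k; apply/implyP => kB; rewrite hsp.
Qed.

Lemma tr_zero p q : ~~ [forall j, syn S p j == syn S q j] ->
  \tr (PS p *m rho *m PS q) = 0.
Proof.
move=> ne.
rewrite -hrho !mulmxA (P_Pi0 hS) -!mulmxA (Pi0_P hS) !mulmxA.
rewrite mxtrace_mulC !mulmxA (syn_mul hS).
have -> : [forall j, syn S q j == syn S p j] = false.
  apply/negbTE; apply: contra ne => /forallP h; apply/forallP => j; by rewrite eq_sym h.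
by rewrite scale0r !mul0mx mxtrace0.
Qed.

Lemma sum_mt_tr p q :
  \sum_(x < 2 ^ r) (mt S x p && mt S x q)%:R * \tr (PS p *m rho *m PS q) =
  \tr (PS p *m rho *m PS q).
Proof.
case: (boolP [forall j, syn S p j == syn S q j]) => [/forallP e | ne]; last first.
  by rewrite tr_zero //; apply: big1 => x _; rewrite mulr0.
have e' : forall x, mt S x q = mt S x p.
  by move=> x; apply: eq_forallb => j; rewrite -(eqP (e j)).
rewrite (bigD1 (idx [ffun j => syn S p j])) //= e' mt_idx eqxx /= mul1r.
rewrite big1 ?addr0 // => x hx.
by rewrite e' mt_idx (negbTE hx) /= mul0r.
Qed.

Lemma tr_PrhoP p : \tr rho = 1 -> \tr (PS p *m rho *m PS p) = 1.
Proof. by move=> h; rewrite mxtrace_mulC mulmxA pauli_sq mul1mx. Qed.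
End Final.

Lemma tens_scale (R : realType) m1 n1 m2 n2 (A : 'M[R[i]]_(m1, n1)) (a : R[i])
  (M : 'M[R[i]]_(m2, n2)) : A *t (a *: M) = a *: (A *t M).
Proof. by apply/matrixP => i j; rewrite !mxE mulrCA. Qed.

Unset Implicit Arguments.
Theorem lemma2p24 (R : realType) (n r : nat) (S : 'I_r -> 'M[R[i]]_(2 ^ n))
    (B : {set 'I_n}) (F : 'M[R[i]]_(2 ^ n) -> 'M[R[i]]_(2 ^ n))
    (rho : 'M[R[i]]_(2 ^ n)) :
  stabilizer_generators S ->
  recoverable S B ->
  acts_as_id_outside B F ->
  density rho ->
  syn_proj S (fun _ => false) *m rho *m syn_proj S (fun _ => false) = rho ->
  exists (alpha : 'I_(2 ^ r) -> R[i]) (E : 'I_(2 ^ r) -> 'M[R[i]]_(2 ^ n)),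
    (forall x, pauli_supported_on B (E x)) /\
    meas S (F rho) = \sum_(x < 2 ^ r) alpha x *: (delta_mx x x *t (E x *m rho *m E x)) /\
    ((forall M, \tr (F M) = \tr M) -> \sum_(x < 2 ^ r) alpha x = 1).
Proof.
move=> hS hrec [K [hK hF]] [_ htr] hrho.
have : forall x : 'I_(2 ^ r), exists u : R[i] * ('I_n -> pauli1),
    suppB B u.2 /\
    syn_proj S (fun j => bit x j) *m F rho *m syn_proj S (fun j => bit x j) =
    u.1 *: (pauli_string R u.2 *m rho *m pauli_string R u.2).
  move=> x; have [a [p0 [h1 h2]]] := proj_F hS hrec hrho hK hF x.
  by exists (a, p0).
case/fin_all_exists => f hf.
exists (fun x => (f x).1), (fun x => pauli_string R (f x).2); split; [|split].
- move=> x; exists 1, (f x).2; split; first by rewrite expr1n.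
  by split; [have [h _] := hf x | rewrite scale1r].
- rewrite /meas; apply: eq_bigr => x _; have [_ h] := hf x.
  by rewrite /Pi h tens_scale.
move=> TP.
have key : forall x, (f x).1 =
    \tr (syn_proj S (fun j => bit x j) *m F rho *m syn_proj S (fun j => bit x j)).
  by move=> x; have [_ ->] := hf x; rewrite mxtraceZ tr_PrhoP // mulr1.
under eq_bigr do rewrite key (proj_expand hS hrho hK hF) !raddf_sum.
rewrite exchange_big /=.
transitivity (\tr (F rho)); last by rewrite TP.
rewrite (F_decomp hK hF rho) !raddf_sum; apply: eq_bigr => p _.
under eq_bigr do rewrite raddf_sum.
rewrite exchange_big /=; rewrite raddf_sum; apply: eq_bigr => q _.
under eq_bigr do rewrite !linearZ /=.
by rewrite -mulr_sumr (sum_mt_tr hS hrho) -mxtraceZ.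
Qed.
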